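(* Assume that $\theta_n>0$ for all $n$ and that \[ \lim_{n\to\infty}\sum_{j=1}^{n-1}\frac{\theta_j\theta_{n-j}}{\theta_n}=0. \] Then $\lim_{n\to\infty}\mathbb{P}_n(L_1=n)=1$. Consequently $\mathbb{P}_n(K=1)\to1$ and $\mathbb{P}_n(R_j=0)\to1$ for every fixed $j$.
   Context: For $\sigma\in\mathcal{S}_n$ (permutations of $\{1,\dots,n\}$), $R_j(\sigma)$ is the number of cycles of length $j$, $L_1(\sigma)$ the length of the cycle containing $1$, and $K(\sigma)=\sum_jR_j(\sigma)$ the number of cycles. Given parameters $\theta_j\ge0$, $h_0=1$, $h_n=\frac1{n!}\sum_{\sigma\in\mathcal{S}_n}\prod_{j}\theta_j^{R_j(\sigma)}$, and $\mathbb{P}_n(\sigma)=\frac1{n!h_n}\prod_j\theta_j^{R_j(\sigma)}$. *)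

(* Defs.v *)
(* Theta takes values in an arbitrary real field R
   (the reals being the intended instance). *)
From HB Require Import structures.
From mathcomp Require Import all_boot all_order all_algebra all_fingroup.
Set Implicit Arguments. Unset Strict Implicit. Unset Printing Implicit Defensive.
Import Order.TTheory GRing.Theory Num.Theory.
Local Open Scope ring_scope.

(* Permutations of {1,...,n} are 'S_n = {perm 'I_n}; the point 1 is ord0. *)

Definition Rj (n j : nat) (s : 'S_n) : nat :=
  #|[set c in porbits s | #|c| == j]|.

Definition Kc (n : nat) (s : 'S_n) : nat := #|porbits s|.

Definition L1 (n : nat) (s : 'S_n.+1) : nat := #|porbit s ord0|.

(* prod_j theta_j^{R_j(s)}  (j ranges over 1..n; R_j = 0 for j > n) *)
Definition weight (R : realFieldType) (theta : nat -> R) (n : nat) (s : 'S_n) : R :=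
  \prod_(1 <= j < n.+1) theta j ^+ Rj j s.

Definition hn (R : realFieldType) (theta : nat -> R) (n : nat) : R :=
  (n`!%:R)^-1 * \sum_(s : 'S_n) weight theta s.

Definition Pn (R : realFieldType) (theta : nat -> R) (n : nat) (s : 'S_n) : R :=
  weight theta s / (n`!%:R * hn theta n).

Definition Prob (R : realFieldType) (theta : nat -> R) (n : nat) (A : pred 'S_n) : R :=
  \sum_(s : 'S_n | A s) Pn theta s.

Definition converges (R : realFieldType) (u : nat -> R) (l : R) : Prop :=
  forall eps : R, 0 < eps -> exists N : nat, forall n : nat, (N <= n)%N -> `|u n - l| < eps.

(* Main.v *)
Require Import Defs.
From HB Require Import structures.
From mathcomp Require Import all_boot all_order all_algebra all_fingroup.
Import Order.TTheory GRing.Theory Num.Theory.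
Local Open Scope ring_scope.

Set Implicit Arguments. Unset Strict Implicit. Unset Printing Implicit Defensive.

Local Open Scope group_scope.

Lemma porbit_sub (T : finType) (u : {perm T}) x (U : {set T}) :
  x \in U -> (forall z, z \in U -> u z \in U) -> porbit u x \subset U.
Proof.
move=> xU cl; apply/subsetP=> z /porbitP[i ->].
elim: i => [|i IH]; first by rewrite expg0 perm1.
by rewrite expgSr permM; apply: cl.
Qed.

Lemma porbit_agree (T : finType) (s u : {perm T}) x :
  (forall z, z \in porbit u x -> s z = u z) -> porbit s x = porbit u x.
Proof.
move=> agr.
have E : forall i, (s ^+ i)%g x = (u ^+ i)%g x.
  elim=> [|i IH]; first by rewrite !expg0.
  by rewrite !expgSr !permM IH agr // mem_porbit.
apply/setP=> z; apply/porbitP/porbitP=> -[i ->]; exists i; by rewrite E.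
Qed.

Lemma iter_porbit_neq (T : finType) (s : {perm T}) x i :
  (0 < i < #|porbit s x|)%N -> iter i s x != x.
Proof.
case/andP=> i0 iP.
have U := uniq_traject_porbit s x.
have P0 : (0 < #|porbit s x|)%N by apply: leq_ltn_trans iP.
have := nth_uniq x (i:=i) (j:=0) _ _ U.
rewrite size_traject => /(_ iP P0).
by rewrite !nth_traject //= => ->; rewrite -lt0n.
Qed.

Lemma card_porbit_eq (T : finType) (s : {perm T}) x d :
  (0 < d)%N -> iter d s x = x -> (forall j, (0 < j < d)%N -> iter j s x != x) ->
  #|porbit s x| = d.
Proof.
move=> d0 itd nd.
have P0 : (0 < #|porbit s x|)%N by rewrite lt0n card_porbit_neq0.
case: (ltngtP #|porbit s x| d) => // H.
  by have := nd _ (introT andP (conj P0 H)); rewrite iter_porbit eqxx.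
by have := @iter_porbit_neq _ s x d; rewrite d0 H itd eqxx => /(_ isT).
Qed.

Lemma iter_porbit_inj (T : finType) (s : {perm T}) x i j :
  (i < #|porbit s x|)%N -> (j < #|porbit s x|)%N -> iter i s x = iter j s x -> i = j.
Proof.
move=> iP jP E.
have U := uniq_traject_porbit s x.
have := nth_uniq x (i:=i) (j:=j) _ _ U.
rewrite size_traject => /(_ iP jP).
by rewrite !nth_traject // E eqxx => /esym/eqP.
Qed.

Lemma porbit_closed (T : finType) (s : {perm T}) w z :
  z \in porbit s w -> s z \in porbit s w.
Proof.
by case/porbitP=> i ->; rewrite -permM -expgSr mem_porbit.
Qed.

Lemma porbit_mul_tperm_merge (T : finType) (s : {perm T}) x y :
  y \notin porbit s x ->
  porbit (tperm x y * s) x = porbit s x :|: porbit s y.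
Proof.
move=> ny.
set s' := tperm x y * s.
have nx : x \notin porbit s y by rewrite porbit_sym.
have xy : x != y by apply: contraNneq ny => <-; apply: porbit_id.
have Hit : forall i, (0 < i <= #|porbit s y|)%N -> iter i s' x = iter i s y.
  elim=> [//|[|i] IH] /andP[_ Hi].
    by rewrite /= /s' permM tpermL.
  rewrite iterS IH ?Hi ?(ltnW Hi) //= -iterS /s' permM tpermD //.
  - apply: contraNneq nx => ->; rewrite -permX; exact: mem_porbit.
  - by rewrite eq_sym; apply: iter_porbit_neq; rewrite /= Hi.
have yO : y \in porbit s' x.
  apply/porbitP; exists #|porbit s y|; rewrite permX Hit ?iter_porbit //.
  by rewrite leqnn lt0n card_porbit_neq0.
have xO : x \in porbit s' x by apply: porbit_id.
have clO : forall z, z \in porbit s' x -> s z \in porbit s' x.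
  move=> z zO.
  have -> : s z = s' (tperm x y z) by rewrite /s' permM tpermK.
  apply: porbit_closed; by case: tpermP.
apply/eqP; rewrite eqEsubset; apply/andP; split.
  apply: porbit_sub; first by rewrite inE porbit_id.
  move=> z; rewrite /s' permM !inE; case: tpermP => [->|->|_ _].
  - by move=> _; rewrite (porbit_closed (porbit_id s y)) orbT.
  - by move=> _; rewrite (porbit_closed (porbit_id s x)).
  - by case/orP=> H; rewrite (porbit_closed H) ?orbT.
apply/subsetP=> z; rewrite inE => /orP[] zz.
  by apply: (subsetP (porbit_sub xO clO)).
by apply: (subsetP (porbit_sub yO clO)).
Qed.

Lemma porbit_mul_tperm_pos (T : finType) (t : {perm T}) x p :
  (0 < p < #|porbit t x|)%N ->
  #|porbit (tperm x (iter p t x) * t) x| = (#|porbit t x| - p)%N.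
Proof.
set m := #|porbit t x|; set y := iter p t x; set s := tperm x y * t.
case/andP=> p0 pm.
have Hit : forall j, (0 < j <= m - p)%N -> iter j s x = iter (p + j) t x.
  elim=> [//|[|j] IH] /andP[_ Hj].
    by rewrite /= /s permM tpermL addn1.
  have Hj' : (p + j.+1 < m)%N by rewrite -ltn_subRL.
  rewrite iterS IH ?Hj ?(ltnW Hj) // [in RHS]addnS [in RHS]iterS /s permM tpermD //.
  - rewrite eq_sym; apply: iter_porbit_neq.
    by rewrite Hj' andbT addn_gt0 p0.
  - apply/eqP=> /iter_porbit_inj E.
    by have := E pm Hj'; move/eqP; rewrite -{1}(addn0 p) eqn_add2l.
apply: card_porbit_eq.
- by rewrite subn_gt0.
- rewrite Hit; last by rewrite subn_gt0 pm leqnn.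
  by rewrite subnKC ?(ltnW pm) // iter_porbit.
- move=> j /andP[j0 jd]; rewrite Hit ?j0 ?(ltnW jd) //.
  apply: iter_porbit_neq; rewrite addn_gt0 p0 /=.
  by rewrite -ltn_subRL.
Qed.

Definition rs (T : finType) (A : {set T}) (s : {perm T}) : {perm T} :=
  insubd (1 : {perm T}) [ffun z => if z \in A then s z else z].

Lemma rsE (T : finType) (A : {set T}) (s : {perm T}) :
  (forall z, z \in A -> s z \in A) -> forall z, rs A s z = if z \in A then s z else z.
Proof.
move=> cl z.
have inj : injectiveb [ffun z => if z \in A then s z else z].
  apply/injectiveP=> a b; rewrite !ffunE.
  case: ifP => aA; case: ifP => bA.
  - exact: perm_inj.
  - by move=> E; move: (cl a aA); rewrite E bA.
  - by move=> E; move: (cl b bA); rewrite -E aA.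
  - by [].
by rewrite /rs -pvalE insubdK // ffunE.
Qed.

Lemma split_clA (T : finType) (s : {perm T}) (x : T) (A : {set T}) z :
  porbit s x = A -> z \in A -> s z \in A.
Proof. by move=> <-; apply: porbit_closed. Qed.

Lemma split_clAc (T : finType) (s : {perm T}) (x : T) (A : {set T}) z :
  porbit s x = A -> z \notin A -> s z \notin A.
Proof.
move=> E; apply: contra; rewrite -E => H.
have E1 : porbit s (s z) = porbit s z.
  by rewrite -[s z]/((s ^+ 1) z) porbit_perm.
have : porbit s (s z) == porbit s x by rewrite eq_porbit_mem.
by rewrite E1 eq_porbit_mem.
Qed.

Lemma rs_mul (T : finType) (s : {perm T}) (x : T) (A : {set T}) :
  porbit s x = A -> rs A s * rs (~: A) s = s.
Proof.
move=> E; have clA := split_clA E; have clAc := split_clAc E.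
have clC : forall z, z \in ~: A -> s z \in ~: A by move=> z; rewrite !inE; apply: clAc.
apply/permP=> z; rewrite permM (rsE clA) (rsE clC) !inE.
case: (boolP (z \in A)) => zA /=; last by rewrite zA.
by rewrite clA.
Qed.

Lemma porbits_in (T : finType) (s : {perm T}) (x : T) (A : {set T}) :
  x \in A -> A \in porbits s -> porbit s x = A.
Proof.
move=> xA /imsetP[z _ Ez]; apply/eqP; by rewrite Ez eq_porbit_mem -Ez.
Qed.

Lemma porbits_of (T : finType) (s : {perm T}) x : porbit s x \in porbits s.
Proof. by apply/imsetP; exists x. Qed.

Lemma perm_on_sub (T : finType) (A B : {set T}) (s : {perm T}) :
  A \subset B -> perm_on A s -> perm_on B s.
Proof. by move=> AB sA; apply: subset_trans sA AB. Qed.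

Lemma split_parts (T : finType) (s : {perm T}) (x : T) (A B : {set T}) :
  perm_on B s -> porbit s x = A ->
  [/\ perm_on A (rs A s), A \in porbits (rs A s) & perm_on (B :\: A) (rs (~: A) s)].
Proof.
move=> sB E; have clA := split_clA E; have clAc := split_clAc E.
have clC : forall z, z \in ~: A -> s z \in ~: A by move=> z; rewrite !inE; apply: clAc.
split.
- apply/subsetP=> z; rewrite inE (rsE clA); case: ifP => //; by rewrite eqxx.
- suff E' : porbit (rs A s) x = A by rewrite -{1}E'; apply: porbits_of.
  rewrite -{2}E; apply: porbit_agree => z; rewrite E => zA.
  by rewrite (rsE clA) zA.
- apply/subsetP=> z; rewrite inE (rsE clC) !inE; case: ifP; last by rewrite eqxx.
  move=> zA sz /=.
  by apply: (subsetP sB); rewrite inE.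
Qed.

Lemma merge_parts (T : finType) (s1 s2 : {perm T}) (x : T) (A B : {set T}) :
  x \in A -> A \subset B -> perm_on A s1 -> A \in porbits s1 -> perm_on (B :\: A) s2 ->
  [/\ perm_on B (s1 * s2), porbit (s1 * s2) x = A,
      rs A (s1 * s2) = s1 & rs (~: A) (s1 * s2) = s2].
Proof.
move=> xA AB s1A As1 s2BA.
have E1 := porbits_in xA As1.
have fix2 : forall z, z \in A -> s2 z = z.
  by move=> z zA; apply: (out_perm s2BA); rewrite inE zA.
have fix1 : forall z, z \notin A -> s1 z = z by move=> z; apply: out_perm.
have agA : forall z, z \in A -> (s1 * s2) z = s1 z.
  by move=> z zA; rewrite permM fix2 // perm_closed.
have E : porbit (s1 * s2) x = A.
  by rewrite -E1; apply: porbit_agree => z; rewrite E1; apply: agA.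
have clA := split_clA E; have clAc := split_clAc E.
have clC : forall z, z \in ~: A -> (s1 * s2) z \in ~: A.
  by move=> z; rewrite !inE; apply: clAc.
split => //.
- apply: perm_onM; first exact: perm_on_sub s1A.
  by apply: perm_on_sub s2BA; apply: subsetDl.
- apply/permP=> z; rewrite (rsE clA); case: ifP => zA; first by rewrite agA.
  by rewrite fix1 ?zA.
- apply/permP=> z; rewrite (rsE clC) inE; case: ifP => zA /=.
    by rewrite permM fix1.
  by rewrite fix2 //; move/negbFE: zA.
Qed.

Lemma decomp (T : finType) (R : nmodType) (A B : {set T}) x (G : {perm T} -> R) :
  x \in A -> A \subset B ->
  (\sum_(s | perm_on B s && (porbit s x == A)) G s =
  \sum_(s1 | perm_on A s1 && (A \in porbits s1))
     \sum_(s2 | perm_on (B :\: A) s2) G ((s1 * s2)%g))%R.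
Proof.
move=> xA AB; rewrite pair_big /=.
rewrite (reindex_onto (fun p : {perm T} * {perm T} => p.1 * p.2)
                      (fun s => (rs A s, rs (~: A) s))) /=; last first.
  by move=> s /andP[_ /eqP E]; apply: rs_mul E.
apply: eq_bigl => -[s1 s2] /=.
apply/idP/idP.
- case/andP=> /andP[sB /eqP E] /eqP[E1 E2].
  case: (split_parts sB E); rewrite E1 E2 => H1 H2 H3.
  by rewrite H1 H2 H3.
- case/andP=> /andP[s1A As1] s2BA.
  case: (merge_parts xA AB s1A As1 s2BA) => -> -> -> ->.
  by rewrite !eqxx.
Qed.

Local Close Scope group_scope.

Definition rep (T : finType) (s : {perm T}) (z : T) := [pick y in porbit s z] == Some z.

Definition wB (R : realFieldType) (th : nat -> R) (T : finType) (B : {set T}) (s : {perm T}) : R :=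
  (\prod_(z in B | rep s z) th #|porbit s z|)%R.

Definition Vb (R : realFieldType) (th : nat -> R) (T : finType) (B : {set T}) : R :=
  (\sum_(s | perm_on B s) wB th B s)%R.

Definition cR (R : realFieldType) (T : finType) (B : {set T}) : R :=
  (\sum_(s | perm_on B s && (B \in porbits s)) 1)%R.

Lemma off_orbit (T : finType) (s1 s2 : {perm T}) (A : {set T}) z :
  perm_on A s1 -> (forall u, u \in A -> s2 u = u) -> z \notin A ->
  porbit (s1 * s2)%g z = porbit s2 z.
Proof.
move=> s1A fix2 zA; apply: porbit_agree => u uO.
have sub : porbit s2 z \subset ~: A.
  apply: porbit_sub; first by rewrite inE.
  move=> v; rewrite !inE; apply: contra => H.
  have : s2 (s2 v) = s2 v by apply: fix2.
  by move/perm_inj => <-.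
have uA : u \notin A by have := subsetP sub u uO; rewrite inE.
by rewrite permM (out_perm s1A uA).
Qed.

Lemma fix_of_perm_on (T : finType) (s2 : {perm T}) (A B : {set T}) :
  perm_on (B :\: A) s2 -> forall u, u \in A -> s2 u = u.
Proof. by move=> H u uA; apply: (out_perm H); rewrite inE uA. Qed.

Lemma porbitsC_merge (T : finType) (s1 s2 : {perm T}) (A B : {set T}) :
  perm_on A s1 -> perm_on (B :\: A) s2 ->
  ((B :\: A) \in porbits (s1 * s2)%g) = ((B :\: A) \in porbits s2).
Proof.
move=> s1A s2BA; have fix2 := fix_of_perm_on s2BA.
apply/imsetP/imsetP => -[z _ Ez]; exists z => //.
- have zA : z \notin A by have := porbit_id (s1 * s2)%g z; rewrite -Ez inE => /andP[].
  by rewrite Ez (off_orbit s1A fix2 zA).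
- have zA : z \notin A by have := porbit_id s2 z; rewrite -Ez inE => /andP[].
  by rewrite Ez (off_orbit s1A fix2 zA).
Qed.

Lemma wB_merge (R : realFieldType) (th : nat -> R) (T : finType) (s1 s2 : {perm T})
   (x : T) (A B : {set T}) :
  x \in A -> A \subset B -> perm_on A s1 -> A \in porbits s1 -> perm_on (B :\: A) s2 ->
  wB th B (s1 * s2)%g = (th #|A| * wB th (B :\: A) s2)%R.
Proof.
move=> xA AB s1A As1 s2BA.
case: (merge_parts xA AB s1A As1 s2BA) => _ E _ _.
have fix2 := fix_of_perm_on s2BA.
have EA : forall z, z \in A -> porbit (s1 * s2)%g z = A.
  by move=> z zA; rewrite -E; apply/eqP; rewrite eq_porbit_mem E.
rewrite /wB (bigID (fun z => z \in A)) /=; congr (_ * _)%R.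
  have [a [Ea aA]] : exists a, [pick y in A] = Some a /\ a \in A.
    case: pickP => [a aA|none]; first by exists a.
    by have := none x; rewrite /= xA.
  rewrite (big_pred1 a) ?EA //.
  move=> z /=; case: (boolP (z \in A)) => zA; last first.
    by rewrite andbF; apply/esym; apply: contraNF zA => /eqP ->.
  by rewrite andbT (subsetP AB _ zA) /rep EA // Ea /= eq_sym.
apply: eq_big => z.
  rewrite !inE /rep.
  case: (boolP (z \in A)) => zA /=; first by rewrite andbF.
  by rewrite andbT (off_orbit s1A fix2 zA).
move=> /andP[_ zA].
by rewrite (off_orbit s1A fix2 zA).
Qed.

Lemma wB_set0 (R : realFieldType) (th : nat -> R) (T : finType) (s : {perm T}) :
  wB th set0 s = 1%R.
Proof. by rewrite /wB big_pred0 // => z; rewrite inE. Qed.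

Lemma wB_full (R : realFieldType) (th : nat -> R) (T : finType) (s : {perm T}) (x : T) (B : {set T}) :
  x \in B -> perm_on B s -> B \in porbits s -> wB th B s = th #|B|.
Proof.
move=> xB sB Bs.
have := @wB_merge R th T s 1 x B B xB (subxx B) sB Bs (perm_on1 _).
by rewrite mulg1 setDv wB_set0 mulr1.
Qed.

Lemma Vb_set0 (R : realFieldType) (th : nat -> R) (T : finType) :
  Vb th (set0 : {set T}) = 1%R.
Proof.
rewrite /Vb (big_pred1 1%g) ?wB_set0 // => s /=.
apply/idP/eqP => [H|->]; last exact: perm_on1.
by apply: perm_on_id H _; rewrite cards0.
Qed.

Lemma porbit_subB (T : finType) (s : {perm T}) (B : {set T}) x :
  perm_on B s -> x \in B -> porbit s x \subset B.
Proof.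
move=> sB xB; apply: porbit_sub => // z zB; by rewrite perm_closed.
Qed.

Lemma V_decomp (R : realFieldType) (th : nat -> R) (T : finType) (B : {set T}) (x : T) :
  x \in B ->
  Vb th B = (\sum_(A : {set T} | (A \subset B) && (x \in A)) cR R A * th #|A| * Vb th (B :\: A))%R.
Proof.
move=> xB; rewrite /Vb (partition_big (fun s => porbit s x) (fun A : {set T} => (A \subset B) && (x \in A))) /=; last first.
  by move=> s sB; rewrite porbit_subB // porbit_id.
apply: eq_bigr => A /andP[AB xA].
rewrite (decomp _ xA AB).
rewrite /cR big_distrl /= big_distrl /=.
apply: eq_bigr => s1 /andP[s1A As1].
rewrite mul1r big_distrr /=.
apply: eq_bigr => s2 s2BA.
by rewrite (wB_merge th xA AB s1A As1 s2BA).
Qed.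

Lemma pos_of (T : finType) (t : {perm T}) (x y : T) (B : {set T}) :
  porbit t x = B -> y \in B -> y != x ->
  (index y (traject t x #|B|) < #|B|)%N /\
  #|porbit (tperm x y * t)%g x| = (#|B| - index y (traject t x #|B|))%N.
Proof.
move=> E yB yx.
have yT : y \in traject t x #|B| by rewrite -E -porbit_traject E.
set p := index y (traject t x #|B|).
have pm : (p < #|B|)%N by rewrite -(size_traject t x #|B|) index_mem.
have Ey : iter p t x = y.
  by rewrite -(nth_traject t pm) nth_index.
have p0 : (0 < p)%N.
  by rewrite lt0n; apply: contraNneq yx => p0; rewrite -Ey p0.
split => //.
rewrite -Ey; have := @porbit_mul_tperm_pos T t x p; rewrite E; apply.
by rewrite p0.
Qed.

Definition ysel (T : finType) (B : {set T}) (s : {perm T}) (x : T) : T :=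
  odflt x [pick y in B :\: porbit s x].

Lemma ysel_in (T : finType) (B : {set T}) (s : {perm T}) (x : T) :
  (B :\: porbit s x) \in porbits s -> ysel B s x \in B :\: porbit s x.
Proof.
move=> /imsetP[z _ Ez]; rewrite /ysel.
case: pickP => [y //|none].
by have := none z; rewrite /= Ez porbit_id.
Qed.

Lemma merge_full (T : finType) (B : {set T}) (s : {perm T}) (x : T) :
  perm_on B s -> x \in B -> (B :\: porbit s x) \in porbits s ->
  perm_on B (tperm x (ysel B s x) * s)%g /\
  porbit (tperm x (ysel B s x) * s)%g x = B.
Proof.
move=> sB xB H; have yin := ysel_in H.
move: yin; set y := ysel B s x => yin.
have yB : y \in B by move: yin; rewrite inE => /andP[].
have yO : y \notin porbit s x by move: yin; rewrite inE => /andP[].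
split.
  apply: perm_onM => //; apply: perm_on_sub (tperm_on x y).
  by apply/subsetP=> z; rewrite !inE => /orP[] /eqP ->.
rewrite porbit_mul_tperm_merge // (porbits_in yin H).
apply/setP=> z; rewrite !inE; case: (boolP (z \in porbit s x)) => //= zO.
by rewrite (subsetP (porbit_subB sB xB) _ zO).
Qed.

Lemma count_j (T : finType) (B : {set T}) (x : T) j :
  x \in B ->
  (#|[set s | perm_on B s && ((B :\: porbit s x) \in porbits s) && (#|porbit s x| == j)]|
   <= #|[set t | perm_on B t && (B \in porbits t)]|)%N.
Proof.
move=> xB.
set S := [set s | _].
set f := fun s : {perm T} => (tperm x (ysel B s x) * s)%g.
have sub : f @: S \subset [set t | perm_on B t && (B \in porbits t)].
  apply/subsetP=> t /imsetP[s sS ->]; move: sS; rewrite !inE => /andP[/andP[sB H] _].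
  case: (merge_full sB xB H) => H1 H2.
  by rewrite H1 /= -{1}H2 porbits_of.
have info : forall s, s \in S ->
   [/\ porbit (f s) x = B, ysel B s x \in B, ysel B s x != x,
       s = (tperm x (ysel B s x) * f s)%g & #|porbit s x| = j].
  move=> s; rewrite inE => /andP[/andP[sB H] /eqP Hj].
  case: (merge_full sB xB H) => _ H2.
  have yin := ysel_in H.
  move: yin; rewrite inE => /andP[yO yB].
  split => //.
  - by apply: contraNneq yO => ->; apply: porbit_id.
  - by rewrite /f mulgA tperm2 mul1g.
rewrite -(@card_in_imset _ _ f S); first exact: subset_leq_card.
move=> s1 s2 S1 S2 Ef.
case: (info _ S1) => E1 yB1 yx1 Es1 Hj1.
case: (info _ S2) => E2 yB2 yx2 Es2 Hj2.
case: (pos_of E1 yB1 yx1) => i1 c1.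
rewrite -Ef in E2.
case: (pos_of E1 yB2 yx2) => i2 c2.
rewrite -Es1 Hj1 in c1.
rewrite -Ef in Es2; rewrite -Es2 Hj2 in c2.
have ei : index (ysel B s1 x) (traject (f s1) x #|B|) =
          index (ysel B s2 x) (traject (f s1) x #|B|).
  by apply/eqP; rewrite -(@eqn_sub2lE #|B|) ?(ltnW i1) ?(ltnW i2) // -c1 -c2.
have ey : ysel B s1 x = ysel B s2 x.
  have m1 : ysel B s1 x \in traject (f s1) x #|B| by rewrite -E1 -porbit_traject E1.
  have m2 : ysel B s2 x \in traject (f s1) x #|B| by rewrite -E1 -porbit_traject E1.
  by rewrite -(nth_index x m1) ei nth_index.
by rewrite Es1 Es2 ey.
Qed.

Lemma sum1R (R : realFieldType) (I : finType) (P : pred I) :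
  \sum_(i | P i) (1 : R) = #|[set i | P i]|%:R.
Proof.
rewrite -sumr_const; apply: eq_bigl => i; by rewrite inE.
Qed.

Lemma cR_card (R : realFieldType) (T : finType) (B : {set T}) :
  cR R B = #|[set t | perm_on B t && (B \in porbits t)]|%:R.
Proof. exact: sum1R. Qed.

Lemma cR_ge0 (R : realFieldType) (T : finType) (B : {set T}) : 0 <= cR R B.
Proof. by rewrite cR_card ler0n. Qed.

Lemma step1 (R : realFieldType) (T : finType) (g : R) (A B : {set T}) (x : T) :
  x \in A -> A \subset B ->
  cR R A * cR R (B :\: A) * g =
  \sum_(s | perm_on B s && (porbit s x == A))
     (if (B :\: A) \in porbits s then g else 0).
Proof.
move=> xA AB; rewrite (decomp _ xA AB).
rewrite /cR !big_distrl /=; apply: eq_bigr => s1 /andP[s1A As1].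
rewrite mul1r big_distrl /= big_mkcondr /=; apply: eq_bigr => s2 s2BA.
by rewrite (porbitsC_merge s1A s2BA) mul1r.
Qed.

Lemma porbits_neq0 (T : finType) (s : {perm T}) : set0 \notin porbits s.
Proof.
apply/negP=> /imsetP[z _ Ez].
by have := porbit_id s z; rewrite -Ez inE.
Qed.

Lemma key_ineq (R : realFieldType) (T : finType) (g : nat -> R) (B : {set T}) (x : T) :
  (forall j, (0 < j < #|B|)%N -> 0 <= g j) -> x \in B ->
  \sum_(A : {set T} | (A \subset B) && (x \in A) && (A != B))
     cR R A * cR R (B :\: A) * g #|A|
   <= cR R B * \sum_(1 <= j < #|B|) g j.
Proof.
move=> g0 xB.
set Q := fun A : {set T} => (A \subset B) && (x \in A) && (A != B).
set F := fun (A : {set T}) (s : {perm T}) =>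
  if (B :\: A) \in porbits s then g #|A| else 0.
have E1 : \sum_(A : {set T} | Q A) cR R A * cR R (B :\: A) * g #|A| =
          \sum_(A : {set T} | Q A) \sum_(s | perm_on B s && (porbit s x == A)) F A s.
  apply: eq_bigr => A /andP[/andP[AB xA] _]; exact: step1.
have E2 : \sum_(A : {set T} | Q A) \sum_(s | perm_on B s && (porbit s x == A)) F A s =
          \sum_(s | perm_on B s && ((B :\: porbit s x) \in porbits s)) g #|porbit s x|.
  rewrite [RHS](partition_big (fun s => porbit s x) Q); last first.
    move=> s /andP[sB H]; rewrite /Q porbit_subB // porbit_id /=.
    apply: contraNneq (porbits_neq0 s) => E.
    by move: H; rewrite E setDv.
  apply: eq_bigr => A _.
  rewrite [LHS]big_mkcond [RHS]big_mkcond; apply: eq_bigr => s _ /=.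
  case: (boolP (porbit s x == A)) => [/eqP EA|]; last by rewrite !andbF.
  rewrite /F EA !andbT.
  by case: (perm_on B s); case: (B :\: A \in porbits s).
rewrite E1 E2 {E1 E2}.
have E3 : forall s, perm_on B s && ((B :\: porbit s x) \in porbits s) ->
   g #|porbit s x| =
   \sum_(1 <= j < #|B|) (if j == #|porbit s x| then g j else 0).
  move=> s /andP[sB H].
  rewrite -big_mkcond /= big_nat1_eq.
  rewrite lt0n card_porbit_neq0 /=.
  have -> : (#|porbit s x| < #|B|)%N => //.
  apply: proper_card; rewrite properEneq porbit_subB ?andbT //.
  apply: contraNneq (porbits_neq0 s) => E.
  by move: H; rewrite E setDv.
rewrite (eq_bigr _ E3) exchange_big /= big_distrr /=.
apply: ler_sum_nat => j jr.
rewrite -big_mkcondr /=.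
rewrite (_ : \sum_(i | _) g j = (\sum_(i | perm_on B i && (B :\: porbit i x \in porbits i) &&
            (j == #|porbit i x|)) 1) * g j); last first.
  by rewrite big_distrl /=; apply: eq_bigr => *; rewrite mul1r.
rewrite sum1R; apply: ler_wpM2r; first exact: g0.
rewrite cR_card ler_nat.
have -> : [set i | perm_on B i && (B :\: porbit i x \in porbits i) && (j == #|porbit i x|)] =
  [set s | perm_on B s && ((B :\: porbit s x) \in porbits s) && (#|porbit s x| == j)].
  by apply/setP=> s; rewrite !inE eq_sym.
exact: count_j.
Qed.

Definition eps (R : realFieldType) (th : nat -> R) (m : nat) : R :=
  \sum_(1 <= j < m) th j * th (m - j)%N / th m.

Fixpoint Kseq (R : realFieldType) (th : nat -> R) (m : nat) : R :=
  match m with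
  | 0 => 2
  | m'.+1 => Num.max (Kseq th m') (1 + Kseq th m' * eps th m)
  end.

Lemma eps_ge0 (R : realFieldType) (th : nat -> R) m :
  (forall n, (0 < n)%N -> 0 < th n) -> 0 <= eps th m.
Proof.
move=> thp; rewrite /eps big_nat_cond; apply: sumr_ge0 => j /andP[/andP[j1 jm] _].
apply: divr_ge0; last by apply/ltW/thp/(leq_ltn_trans (leq0n j) jm).
by apply/mulr_ge0; apply/ltW/thp; rewrite ?subn_gt0.
Qed.

Lemma Kseq_ge2 (R : realFieldType) (th : nat -> R) m : 2 <= Kseq th m.
Proof. by elim: m => [|m IH] //=; rewrite le_max IH. Qed.

Lemma Kseq_mono (R : realFieldType) (th : nat -> R) m n :
  (m <= n)%N -> Kseq th m <= Kseq th n.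
Proof.
move/subnK => <-; elim: (n - m)%N => [|k IH] //=.
by rewrite (le_trans IH) // le_max lexx.
Qed.

Lemma wB_gt0 (R : realFieldType) (th : nat -> R) (T : finType) (B : {set T}) s :
  (forall n, (0 < n)%N -> 0 < th n) -> 0 < wB th B s.
Proof.
move=> thp; apply: prodr_gt0 => z _; apply: thp.
by rewrite lt0n card_porbit_neq0.
Qed.

Lemma Vb_ge0 (R : realFieldType) (th : nat -> R) (T : finType) (B : {set T}) :
  (forall n, (0 < n)%N -> 0 < th n) -> 0 <= Vb th B.
Proof. by move=> thp; apply: sumr_ge0 => s _; apply/ltW/wB_gt0. Qed.

Lemma main_bound (R : realFieldType) (th : nat -> R) :
  (forall n, (0 < n)%N -> 0 < th n) ->
  forall n (T : finType) (B : {set T}), #|B| = n.+1 ->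
  Vb th B <= (1 + Kseq th n * eps th n.+1) * (cR R B * th n.+1).
Proof.
move=> thp; elim/ltn_ind => n IH T B cB.
have [x xB] : exists x, x \in B.
  by apply/set0Pn; rewrite -card_gt0 cB.
rewrite (V_decomp th xB) (bigD1 B) /=; last by rewrite subxx xB.
rewrite setDv Vb_set0 mulr1 cB mulrDl mul1r lerD2l.
have H1 : forall A : {set T}, (A \subset B) && (x \in A) && (A != B) ->
   cR R A * th #|A| * Vb th (B :\: A) <=
   Kseq th n * (cR R A * cR R (B :\: A) * (th #|A| * th (n.+1 - #|A|)%N)).
  move=> A /andP[/andP[AB xA] nAB].
  have cA : #|B :\: A| = (n.+1 - #|A|)%N.
    by rewrite cardsD cB (setIidPr AB).
  have Alt : (#|A| < n.+1)%N.
    by rewrite -cB; apply: proper_card; rewrite properEneq nAB AB.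
  have A0 : (0 < #|A|)%N by rewrite card_gt0; apply/set0Pn; exists x.
  have cA' : #|B :\: A| = (n - #|A|).+1 by rewrite cA subSn.
  have := IH (n - #|A|)%N _ T (B :\: A) cA'.
  rewrite ltn_subrL A0 /= => /(_ (leq_trans A0 Alt)) HV0.
  have HV : Vb th (B :\: A) <= Kseq th n * (cR R (B :\: A) * th (n - #|A|).+1).
    apply: (le_trans HV0); apply: ler_wpM2r.
      by apply: mulr_ge0; [exact: cR_ge0 | apply/ltW/thp].
    apply: (@le_trans _ _ (Kseq th (n - #|A|).+1)); first by rewrite /= le_max lexx orbT.
    by apply: Kseq_mono; rewrite -subSn // leq_subLR -add1n leq_add2r.
  rewrite subSn //.
  have cth : 0 <= cR R A * th #|A| by apply: mulr_ge0; [exact: cR_ge0 | apply/ltW/thp].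
  apply: (le_trans (ler_wpM2l cth HV)).
  by rewrite mulrCA -!mulrA (mulrCA (th #|A|)).
apply: (le_trans (ler_sum _ H1)); rewrite -mulr_sumr -mulrA ler_wpM2l //.
  by apply: le_trans (Kseq_ge2 th n).
apply: (le_trans (@key_ineq R T (fun k => th k * th (n.+1 - k)%N) B x _ xB)) => /=.
  move=> j /andP[j0 jn]; apply: mulr_ge0; apply/ltW/thp => //.
  by rewrite subn_gt0 -cB.
rewrite cB.
rewrite mulrCA ler_wpM2l ?cR_ge0 //.
rewrite /eps mulr_suml le_eqVlt; apply/orP; left; apply/eqP.
by apply: eq_bigr => j _; rewrite divfK // gt_eqF // thp.
Qed.

Lemma rep_orbits (T : finType) (s : {perm T}) :
  porbits s = porbit s @: [set z | rep s z].
Proof.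
apply/setP=> c; apply/imsetP/imsetP => -[z zin ->]; last by exists z.
have [a [Ea aO]] : exists a, [pick y in porbit s z] = Some a /\ a \in porbit s z.
  case: pickP => [a aA|none]; first by exists a.
  by have := none z; rewrite /= porbit_id.
have Eo : porbit s a = porbit s z by apply/eqP; rewrite eq_porbit_mem.
exists a => //; by rewrite inE /rep Eo Ea.
Qed.

Lemma rep_inj (T : finType) (s : {perm T}) :
  {in [set z | rep s z] &, injective (porbit s)}.
Proof.
move=> a b; rewrite !inE /rep => /eqP Ea /eqP Eb E.
by move: Ea; rewrite E Eb => -[].
Qed.

Lemma weight_wB (R : realFieldType) (th : nat -> R) n (s : 'S_n) :
  weight th s = wB th [set: 'I_n] s.
Proof.
rewrite /wB (eq_bigl (fun z => z \in [set z | rep s z])); last first.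
  by move=> z; rewrite !inE.
rewrite -(big_imset (fun c : {set 'I_n} => th #|c|) (@rep_inj _ s)) /= -rep_orbits.
rewrite (partition_big (fun c : {set 'I_n} => (inord #|c| : 'I_n.+1)) predT) //=.
have Hin : forall j : 'I_n.+1,
  \prod_(i in porbits s | inord #|i| == j) th #|i| = th j ^+ Rj j s.
  move=> j.
  rewrite (eq_bigl (fun i => i \in [set c in porbits s | #|c| == j])); last first.
    move=> c; rewrite !inE; congr (_ && _).
    have cn : (#|c| < n.+1)%N by rewrite ltnS (leq_trans (max_card _)) // card_ord.
    by rewrite -val_eqE /= inordK.
  rewrite (eq_bigr (fun=> th j)); last by move=> c; rewrite inE => /andP[_ /eqP ->].
  by rewrite prodr_const.
rewrite (eq_bigr _ (fun j _ => Hin j)).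
rewrite -(big_mkord xpredT (fun j => th j ^+ Rj j s)) big_ltn //.
have -> : Rj 0 s = 0%N.
  apply/eqP; rewrite cards_eq0; apply/eqP/setP=> c; rewrite !inE.
  apply/negP => /andP[/imsetP[z _ ->]]; by rewrite (negPf (card_porbit_neq0 s z)).
by rewrite expr0 mul1r.
Qed.

Lemma weight_gt0 (R : realFieldType) (th : nat -> R) n (s : 'S_n) :
  (forall n, (0 < n)%N -> 0 < th n) -> 0 < weight th s.
Proof. by move=> thp; rewrite weight_wB; apply: wB_gt0. Qed.

Lemma Wsum_gt0 (R : realFieldType) (th : nat -> R) n :
  (forall n, (0 < n)%N -> 0 < th n) -> 0 < \sum_(s : 'S_n) weight th s.
Proof.
move=> thp; rewrite (bigD1 1%g) //= ltr_wpDr ?weight_gt0 //.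
by apply: sumr_ge0 => s _; apply/ltW/weight_gt0.
Qed.

Lemma Prob_eq (R : realFieldType) (th : nat -> R) n (A : pred 'S_n) :
  Prob th A = (\sum_(s | A s) weight th s) / (\sum_(s : 'S_n) weight th s).
Proof.
rewrite /Prob /Pn /hn mulrA mulfV ?mul1r ?pnatr_eq0 -?lt0n ?fact_gt0 //.
by rewrite mulr_suml.
Qed.

Lemma Prob_le (R : realFieldType) (th : nat -> R) n (A B : pred 'S_n) :
  (forall n, (0 < n)%N -> 0 < th n) -> (forall s, B s -> A s) ->
  Prob th B <= Prob th A.
Proof.
move=> thp BA; rewrite !Prob_eq; apply: ler_wpM2r; first by rewrite invr_ge0 ltW // Wsum_gt0.
rewrite [X in X <= _]big_mkcond [X in _ <= X]big_mkcond; apply: ler_sum => s _.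
case: (boolP (B s)) => Bs; first by rewrite (BA _ Bs).
by case: (A s) => //; apply/ltW/weight_gt0.
Qed.

Lemma Prob_le1 (R : realFieldType) (th : nat -> R) n (A : pred 'S_n) :
  (forall n, (0 < n)%N -> 0 < th n) -> Prob th A <= 1.
Proof.
move=> thp; apply: (le_trans (Prob_le (A := predT) thp _)) => //.
by rewrite Prob_eq mulfV // gt_eqF // Wsum_gt0.
Qed.

Lemma perm_onT (T : finType) (s : {perm T}) : perm_on [set: T] s.
Proof. by apply/subsetP=> z _; rewrite in_setT. Qed.

Lemma full_iff n (s : 'S_n.+1) :
  (L1 s == n.+1) = ([set: 'I_n.+1] \in porbits s).
Proof.
apply/idP/idP => [H|H].
  have -> : [set: 'I_n.+1] = porbit s ord0.
    have H' : #|porbit s ord0| = n.+1 := eqP H.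
    apply/esym/eqP; rewrite eqEcard subsetT cardsT card_ord /=. by rewrite [X in (_ < X)%N]H'.
  exact: porbits_of.
by rewrite /L1 (porbits_in _ H) ?inE // cardsT card_ord.
Qed.

Lemma prob1_bound (R : realFieldType) (th : nat -> R) n :
  (forall n, (0 < n)%N -> 0 < th n) ->
  1 - Prob th (fun s : 'S_n.+1 => L1 s == n.+1) <= Kseq th n * eps th n.+1.
Proof.
move=> thp.
set P := Prob _ _.
have EW : \sum_(s : 'S_n.+1) weight th s = Vb th [set: 'I_n.+1].
  rewrite /Vb; apply: eq_big => s; first by rewrite perm_onT.
  by rewrite weight_wB.
have EC : \sum_(s : 'S_n.+1 | L1 s == n.+1) weight th s = cR R [set: 'I_n.+1] * th n.+1.
  rewrite /cR big_distrl /=; apply: eq_big => [s|s]; first by rewrite full_iff perm_onT.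
  rewrite full_iff => H; rewrite mul1r weight_wB (wB_full th (x := ord0)) ?inE ?perm_onT //.
  by rewrite cardsT card_ord.
have Wp : 0 < Vb th [set: 'I_n.+1] by rewrite -EW Wsum_gt0.
have PE : P = cR R [set: 'I_n.+1] * th n.+1 / Vb th [set: 'I_n.+1].
  by rewrite /P Prob_eq EC EW.
have Hb := @main_bound R th thp n _ [set: 'I_n.+1] (etrans (cardsT _) (card_ord _)).
have Ke : 0 <= Kseq th n * eps th n.+1.
  by apply: mulr_ge0; [apply: le_trans (Kseq_ge2 th n) | apply: eps_ge0].
have P1 : P <= 1 by apply: Prob_le1.
have H1 : 1 <= (1 + Kseq th n * eps th n.+1) * P.
  by rewrite PE mulrA ler_pdivlMr // mul1r.
apply: (@le_trans _ _ (Kseq th n * eps th n.+1 * P)).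
  by rewrite lerBlDr; move: H1; rewrite mulrDl mul1r addrC.
by rewrite -{2}[Kseq th n * eps th n.+1]mulr1 ler_wpM2l.
Qed.

Lemma Kseq_bounded (R : realFieldType) (th : nat -> R) :
  (forall n, (0 < n)%N -> 0 < th n) -> converges (eps th) 0 ->
  exists Kb : R, 0 < Kb /\ forall m, Kseq th m <= Kb.
Proof.
move=> thp hyp.
have [N0 HN0] := hyp (1 / 2) (ltac:(by rewrite divr_gt0)).
exists (Kseq th N0); split; first by apply: lt_le_trans (Kseq_ge2 th N0).
have stat : forall k, Kseq th (N0 + k) = Kseq th N0.
  elim=> [|k IH]; first by rewrite addn0.
  rewrite addnS /= max_l // IH.
  set K := Kseq th N0.
  have K2 : 2 <= K by apply: Kseq_ge2.
  have e2 : eps th (N0 + k).+1 <= 1 / 2.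
    apply/ltW/ltr_normlW; rewrite -(subr0 (eps _ _)); apply: HN0.
    by rewrite -addnS leq_addr.
  apply: (@le_trans _ _ (K / 2 + K / 2)); last by rewrite -splitr.
  rewrite addrC lerD //.
    rewrite ler_pdivlMr // -mulrA ler_piMr //; first by apply: le_trans K2.
    by rewrite -ler_pdivlMr.
  by rewrite ler_pdivlMr // mul1r.
move=> m; case: (leqP m N0) => H; first exact: Kseq_mono.
by rewrite -(subnKC (ltnW H)) stat.
Qed.

Lemma full_porbits n (s : 'S_n.+1) :
  L1 s == n.+1 -> porbits s = [set [set: 'I_n.+1]].
Proof.
rewrite full_iff => H; apply/setP=> c; rewrite inE; apply/idP/eqP => [/imsetP[z _ ->]|->] //.
by apply: porbits_in; rewrite ?inE.
Qed.

Lemma stmt1 (R : realFieldType) (th : nat -> R) :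
  (forall n, (0 < n)%N -> 0 < th n) -> converges (eps th) 0 ->
  converges (fun n : nat => Prob th (fun s : 'S_n.+1 => L1 s == n.+1)) 1.
Proof.
move=> thp hyp e e0.
have [Kb [Kb0 HK]] := Kseq_bounded thp hyp.
have [N1 HN1] := hyp (e / Kb) (divr_gt0 e0 Kb0).
exists N1 => n nN.
have P1 : Prob th (fun s : 'S_n.+1 => L1 s == n.+1) <= 1 by apply: Prob_le1.
rewrite ler0_norm ?subr_le0 // opprB.
apply: (le_lt_trans (@prob1_bound R th n thp)).
have e1 : eps th n.+1 < e / Kb.
  by apply: ltr_normlW; rewrite -(subr0 (eps _ _)); apply: HN1; apply: leqW.
apply: (@le_lt_trans _ _ (Kb * eps th n.+1)).
  by apply: ler_wpM2r; [apply: eps_ge0 | apply: HK].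
by rewrite mulrC -ltr_pdivlMr.
Qed.

Lemma conv_from_full (R : realFieldType) (th : nat -> R) (A : forall n, pred 'S_n) n0 :
  (forall n, (0 < n)%N -> 0 < th n) -> converges (eps th) 0 ->
  (forall n (s : 'S_n.+1), (n0 <= n)%N -> L1 s == n.+1 -> A n.+1 s) ->
  converges (fun n => Prob th (A n)) 1.
Proof.
move=> thp hyp HA e e0.
have [N HN] := stmt1 thp hyp e0.
exists (maxn N n0).+1 => -[//|n] nN.
rewrite ltnS geq_max in nN; case/andP: nN => nN nn0.
have P1 : Prob th (A n.+1) <= 1 by apply: Prob_le1.
rewrite ler0_norm ?subr_le0 // opprB.
have := HN n nN.
have Q1 : Prob th (fun s : 'S_n.+1 => L1 s == n.+1) <= 1 by apply: Prob_le1.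
rewrite ler0_norm ?subr_le0 // opprB; apply: le_lt_trans.
rewrite lerD2l lerN2; apply: Prob_le => // s; exact: HA.
Qed.

Unset Implicit Arguments.

Theorem theorem3p1 (R : realFieldType) (theta : nat -> R)
  (theta_pos : forall n : nat, (0 < n)%N -> 0 < theta n)
  (hyp : converges
           (fun n : nat => \sum_(1 <= j < n) theta j * theta (n - j)%N / theta n) 0) :
  converges (fun n : nat => Prob theta (fun s : 'S_n.+1 => L1 s == n.+1)) 1
  /\ converges (fun n : nat => Prob theta (fun s : 'S_n => Kc s == 1%N)) 1
  /\ (forall j : nat, converges (fun n : nat => Prob theta (fun s : 'S_n => Rj j s == 0%N)) 1).
Proof.
have hyp' : converges (eps theta) 0 := hyp.
split; first exact: stmt1.
split.
  apply: (@conv_from_full R theta (fun n (s : 'S_n) => Kc s == 1%N) 0) => // n s _ H.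
  by rewrite /Kc full_porbits // cards1.
move=> j.
apply: (@conv_from_full R theta (fun n (s : 'S_n) => Rj j s == 0%N) j) => // n s jn H.
rewrite /Rj full_porbits // cards_eq0; apply/eqP/setP=> c; rewrite !inE.
apply/negP=> /andP[/eqP -> /eqP]; rewrite cardsT card_ord => E.
by move: jn; rewrite -E ltnn.
Qed.
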